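(* For every integer $d\geqslant 1$ and every real $x>0$, $$Q_d(x)=\vartheta(d)\sqrt x+O(d^2),$$ with an absolute implied constant. Here $$\vartheta(d)=\frac{32d^2}{5}\sqrt d-\frac{48d^2+16d-2}{15}\sqrt{d+1}-\frac{48d^2-16d-2}{15}\sqrt{d-1}.$$
   Context: For real $t$, $\lfloor t\rfloor$ is the integer part and $\{t\}=t-\lfloor t\rfloor$ the fractional part. For an integer $d\geqslant 0$ and real $x>0$, $$Q_d(x)=\sum_{n\geqslant 1}\big[\lfloor x/n\rfloor-\lfloor x/(n+1)\rfloor=d\big]\cdot\big(\{x/n\}-\{x/(n+1)\}\big)^2,$$ where $[P]$ equals $1$ if the proposition $P$ is true and $0$ otherwise. *)

(* Defs.v *)
From Stdlib Require Import Reals ZArith.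
From Coquelicot Require Import Coquelicot.
Open Scope R_scope.

(* Stdlib's Int_part r = up r - 1 is the floor of r; frac_part r = r - Int_part r. *)

Definition Qterm (d : nat) (x : R) (n : nat) : R :=
  if Z.eqb (Int_part (x / INR n) - Int_part (x / INR (S n)))%Z (Z.of_nat d)
  then (frac_part (x / INR n) - frac_part (x / INR (S n))) ^ 2
  else 0.

(* Q_d(x) = sum_{n >= 1} Qterm d x n  (series indexed from n = 1). *)
Definition Q (d : nat) (x : R) : R := Series (fun k : nat => Qterm d x (S k)).

Definition vartheta (d : nat) : R :=
  let t := INR d in
  32 * t ^ 2 / 5 * sqrt t
  - (48 * t ^ 2 + 16 * t - 2) / 15 * sqrt (t + 1)
  - (48 * t ^ 2 - 16 * t - 2) / 15 * sqrt (t - 1).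

(* Main.v *)
Require Import Defs.
From Stdlib Require Import Reals Lra Lia Psatz ZArith.
From Coquelicot Require Import Coquelicot.
Open Scope R_scope.


Definition cl (s : R) := Rmax (-1) (Rmin 1 s).
Definition kk (s : R) := s ^ 2 - Rabs s ^ 3.
Definition hh (s : R) := kk (cl s).

Lemma cl_in s : -1 <= cl s <= 1.
Proof. unfold cl, Rmax, Rmin; repeat destruct Rle_dec; lra. Qed.

Lemma cl_id s : -1 <= s <= 1 -> cl s = s.
Proof. intros; unfold cl, Rmax, Rmin; repeat destruct Rle_dec; lra. Qed.

Lemma cl_lip a b : Rabs (cl a - cl b) <= Rabs (a - b).
Proof. unfold cl, Rmax, Rmin; repeat destruct Rle_dec; unfold Rabs; repeat destruct Rcase_abs; lra. Qed.

Lemma kk_pos_lip a b : 0 <= a <= 1 -> 0 <= b <= 1 -> Rabs (kk a - kk b) <= Rabs (a - b).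
Proof.
  intros Ha Hb; unfold kk. rewrite (Rabs_pos_eq a) by lra. rewrite (Rabs_pos_eq b) by lra.
  replace (a ^ 2 - a ^ 3 - (b ^ 2 - b ^ 3)) with ((a - b) * (a + b - a*a - a*b - b*b)) by ring.
  rewrite Rabs_mult. rewrite <- (Rmult_1_r (Rabs (a - b))) at 2.
  apply Rmult_le_compat_l; [apply Rabs_pos|]. apply Rabs_le; split; nra.
Qed.

Lemma kk_even a : kk (- a) = kk a.
Proof. unfold kk; rewrite Rabs_Ropp; ring. Qed.

Lemma kk_lip a b : -1 <= a <= 1 -> -1 <= b <= 1 -> Rabs (kk a - kk b) <= Rabs (a - b).
Proof.
  intros Ha Hb.
  destruct (Rle_dec 0 a); destruct (Rle_dec 0 b).
  - apply kk_pos_lip; lra.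
  - rewrite <- (kk_even b). eapply Rle_trans. apply kk_pos_lip; lra.
    unfold Rabs; repeat destruct Rcase_abs; lra.
  - rewrite <- (kk_even a). eapply Rle_trans. apply kk_pos_lip; lra.
    unfold Rabs; repeat destruct Rcase_abs; lra.
  - rewrite <- (kk_even a), <- (kk_even b). eapply Rle_trans. apply kk_pos_lip; lra.
    unfold Rabs; repeat destruct Rcase_abs; lra.
Qed.

Lemma hh_lip a b : Rabs (hh a - hh b) <= Rabs (a - b).
Proof. unfold hh. eapply Rle_trans. apply kk_lip; apply cl_in. apply cl_lip. Qed.

Lemma hh_big s : 1 <= s -> hh s = 0.
Proof. intros; unfold hh, cl, kk, Rmax, Rmin; repeat destruct Rle_dec; try lra;
  unfold Rabs; destruct Rcase_abs; try lra; ring. Qed.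

Lemma hh_small s : s <= -1 -> hh s = 0.
Proof. intros; unfold hh, cl, kk, Rmax, Rmin; repeat destruct Rle_dec; try lra.
  all: unfold Rabs; destruct Rcase_abs; try (replace s with (-1) by lra); try lra; ring. Qed.

Lemma Rabs_le_b a b : Rabs a <= b -> -b <= a <= b.
Proof. unfold Rabs; destruct Rcase_abs; lra. Qed.

Lemma hh_bound s : Rabs (hh s) <= 1.
Proof. unfold hh, kk. pose proof (cl_in s). set (c := cl s) in *.
  assert (0 <= Rabs c <= 1) by (unfold Rabs; destruct Rcase_abs; lra).
  replace (c ^ 2) with (Rabs c ^ 2) by (unfold Rabs; destruct Rcase_abs; ring).
  apply Rabs_le; split; nra. Qed.


Definition phi (s : R) := cl s * Rabs (cl s).
Definition ind1 (s : R) := if Rle_dec 1 s then 1 else 0.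
Definition ind2 (s : R) := if Rle_dec s (-1) then 1 else 0.
Definition gg (s : R) := phi s - ind1 s + ind2 s.

Lemma gg_out s : (1 <= s \/ s <= -1) -> gg s = 0.
Proof. intros H; unfold gg, phi, ind1, ind2, cl, Rmax, Rmin; repeat destruct Rle_dec; try lra;
  unfold Rabs; destruct Rcase_abs; try lra;
  try (replace s with 1 by lra); try (replace s with (-1) by lra); ring. Qed.

Lemma in_mid s : -1 < s < 1 -> hh s = s^2 - Rabs s ^ 3 /\ gg s = s * Rabs s.
Proof. intros H; unfold gg, hh, phi, ind1, ind2; rewrite cl_id by lra;
  unfold kk; repeat destruct Rle_dec; try lra; split; ring. Qed.

Lemma frac_bounds r : 0 <= frac_part r < 1.
Proof. unfold frac_part; pose proof (base_Int_part r); lra. Qed.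

Lemma key_id (a b : R) (D : Z) :
  (if Z.eqb (Int_part a - Int_part b)%Z D
   then (frac_part a - frac_part b) ^ 2 else 0)
  = hh (a - b - IZR D) + gg (a - b - IZR D) * (frac_part a - frac_part b).
Proof.
  pose proof (frac_bounds a) as Fa. pose proof (frac_bounds b) as Fb.
  assert (Ea : a = IZR (Int_part a) + frac_part a) by (unfold frac_part; ring).
  assert (Eb : b = IZR (Int_part b) + frac_part b) by (unfold frac_part; ring).
  set (m := (Int_part a - Int_part b)%Z).
  set (dl := frac_part a - frac_part b).
  assert (Es : a - b - IZR D = IZR (m - D) + dl).
  { unfold m, dl; rewrite minus_IZR, minus_IZR; lra. }
  rewrite Es. assert (Hd : -1 < dl < 1) by (unfold dl; lra).
  destruct (Z.eqb_spec m D) as [E|E].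
  - rewrite E, Z.sub_diag. simpl IZR. rewrite Rplus_0_l.
    destruct (in_mid dl Hd) as [-> ->].
    unfold Rabs; destruct Rcase_abs; ring.
  - assert (Hc : (m - D = 1 \/ m - D = -1 \/ (m - D >= 2) \/ (m - D <= -2))%Z) by lia.
    destruct Hc as [C|[C|[C|C]]].
    + rewrite C. simpl IZR.
      destruct (Rle_dec 1 (1 + dl)).
      * rewrite hh_big, gg_out; lra.
      * destruct (in_mid (1 + dl)) as [-> ->]; [lra|].
        rewrite Rabs_pos_eq by lra. ring_simplify.
        nra.
    + rewrite C. simpl IZR.
      destruct (Rle_dec (-1 + dl) (-1)).
      * rewrite hh_small, gg_out; lra.
      * destruct (in_mid (-1 + dl)) as [-> ->]; [lra|].
        rewrite Rabs_left by lra. ring.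
    + apply IZR_ge in C. rewrite hh_big, gg_out; lra.
    + apply IZR_le in C. rewrite hh_small, gg_out; lra.
Qed.

Lemma Qterm_id d x n :
  Qterm d x n = hh (x / INR n - x / INR (S n) - INR d)
    + gg (x / INR n - x / INR (S n) - INR d) * (frac_part (x / INR n) - frac_part (x / INR (S n))).
Proof. unfold Qterm. rewrite key_id. rewrite (INR_IZR_INZ d). reflexivity. Qed.


Fixpoint sumN (f : nat -> R) (N : nat) : R :=
  match N with O => 0 | S m => sumN f m + f (S m) end.

Lemma sumN_plus f g N : sumN (fun n => f n + g n) N = sumN f N + sumN g N.
Proof. induction N; simpl; [ring|rewrite IHN; ring]. Qed.

Lemma sumN_opp f N : sumN (fun n => - f n) N = - sumN f N.
Proof. induction N; simpl; [ring|rewrite IHN; ring]. Qed.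

Lemma sumN_ext f g N : (forall n, (1 <= n <= N)%nat -> f n = g n) -> sumN f N = sumN g N.
Proof. induction N; intros H; simpl; auto. rewrite IHN by (intros; apply H; lia).
  rewrite H by lia. reflexivity. Qed.

Lemma sumN_abs_le f g N : (forall n, (1 <= n <= N)%nat -> Rabs (f n) <= g n) ->
  Rabs (sumN f N) <= sumN g N.
Proof. induction N; intros H; simpl. rewrite Rabs_R0; lra.
  eapply Rle_trans. apply Rabs_triang. apply Rplus_le_compat.
  apply IHN; intros; apply H; lia. apply H; lia. Qed.


Lemma abel_dec (G u : nat -> R) N :
  (forall n, (1 <= n)%nat -> G (S n) <= G n) -> (forall n, Rabs (G n) <= 1) ->
  (forall n, 0 <= u n <= 1) ->
  Rabs (sumN (fun n => G n * (u n - u (S n))) N) <= 4.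
Proof.
  intros HG HB HU.
  assert (Inv : forall N, (1 <= N)%nat ->
     G 1%nat * u 1%nat - G N * u (S N) + (G N - G 1%nat) <= sumN (fun n => G n * (u n - u (S n))) N
     <= G 1%nat * u 1%nat - G N * u (S N)).
  { intros M HM. induction M as [|M IH]. lia.
    destruct M as [|M]. simpl. lra.
    specialize (IH ltac:(lia)). simpl sumN in *.
    pose proof (HG (S M) ltac:(lia)). pose proof (HU (S (S M))).
    split; nra. }
  destruct N as [|N]. simpl. rewrite Rabs_R0; lra.
  specialize (Inv (S N) ltac:(lia)).
  pose proof (HB 1%nat) as B1. pose proof (HB (S N)) as BN.
  apply Rabs_le_b in B1. apply Rabs_le_b in BN.
  pose proof (HU 1%nat). pose proof (HU (S (S N))).
  apply Rabs_le; split; nra.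
Qed.

Lemma abel_inc (G u : nat -> R) N :
  (forall n, (1 <= n)%nat -> G n <= G (S n)) -> (forall n, Rabs (G n) <= 1) ->
  (forall n, 0 <= u n <= 1) ->
  Rabs (sumN (fun n => G n * (u n - u (S n))) N) <= 4.
Proof.
  intros HG HB HU.
  replace (sumN (fun n => G n * (u n - u (S n))) N) with
    (- sumN (fun n => (- G n) * (u n - u (S n))) N).
  rewrite Rabs_Ropp. apply abel_dec; auto.
  intros n Hn; specialize (HG n Hn); lra.
  intros n; rewrite Rabs_Ropp; auto.
  rewrite <- sumN_opp. apply sumN_ext. intros; ring.
Qed.

Lemma tail_sum (a : nat -> R) K N :
  (forall n, (1 <= n)%nat -> 0 < a n) -> (forall n, (1 <= n)%nat -> a (S n) <= a n) ->
  (forall n, (1 <= n)%nat -> a n <= 4 * a (S n)) -> 0 <= K ->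
  sumN (fun n => if Rle_dec (a (S n)) K then a n - a (S n) else 0) N <= 4 * K.
Proof.
  intros Hp Hd Hr HK.
  assert (Inv : forall N, sumN (fun n => if Rle_dec (a (S n)) K then a n - a (S n) else 0) N
             <= Rmax 0 (4 * K - a (S N))).
  { intros M; induction M as [|M IH]. simpl. apply Rmax_l.
    simpl sumN. destruct (Rle_dec (a (S (S M))) K).
    - pose proof (Hr (S M) ltac:(lia)).
      apply Rle_trans with (4 * K - a (S (S M))); [|apply Rmax_r].
      revert IH; unfold Rmax; destruct Rle_dec; intros; lra.
    - pose proof (Hd (S M) ltac:(lia)). eapply Rle_trans. rewrite Rplus_0_r. apply IH.
      unfold Rmax; repeat destruct Rle_dec; lra. }
  eapply Rle_trans. apply Inv. pose proof (Hp (S N) ltac:(lia)). unfold Rmax; destruct Rle_dec; lra.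
Qed.


Definition fz (x e : R) (z : R) := hh (x / (z * z) - e).

Lemma hh_cont s : continuity_pt hh s.
Proof.
  unfold continuity_pt, continue_in, limit1_in, limit_in. intros eps Heps.
  exists eps; split; auto. intros y [_ Hy]. simpl in *. unfold R_dist in *.
  eapply Rle_lt_trans. apply hh_lip. auto.
Qed.

Lemma fz_cont x e z : z <> 0 -> continuous (fz x e) z.
Proof.
  intros Hz. apply continuity_pt_filterlim.
  change (fz x e) with (comp hh (fun z => x / (z * z) - e)).
  apply continuity_pt_comp. 2: apply hh_cont.
  apply continuity_pt_minus. apply continuity_pt_div.
  apply continuity_pt_const. intros a b; reflexivity.
  apply continuity_pt_mult; apply continuity_pt_id.
  intro H1; apply Hz; apply Rmult_integral in H1; tauto.
  apply continuity_pt_const. intros a b; reflexivity.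
Qed.

Lemma fz_exRInt x e a b : 0 < a -> 0 < b -> ex_RInt (fz x e) a b.
Proof.
  intros Ha Hb. apply (ex_RInt_continuous (V := R_CompleteNormedModule)). intros z Hz. apply fz_cont.
  assert (0 < z); [|lra]. destruct Hz as [Hz _]. eapply Rlt_le_trans; [|apply Hz].
  unfold Rmin; destruct Rle_dec; lra.
Qed.

Lemma hh_pos s : 0 <= s <= 1 -> hh s = s^2 - s^3.
Proof. intros; unfold hh; rewrite cl_id by lra; unfold kk; rewrite Rabs_pos_eq by lra; ring. Qed.

Lemma hh_neg s : -1 <= s <= 0 -> hh s = s^2 + s^3.
Proof. intros; unfold hh; rewrite cl_id by lra; unfold kk; rewrite Rabs_left1 by lra; ring. Qed.

Definition A1 (x e z : R) := x^3/(5*z^5) - (1+3*e)*x^2/(3*z^3) + (2*e+3*e^2)*x/z + e^2*(1+e)*z.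
Definition A2 (x e z : R) := - x^3/(5*z^5) - (1-3*e)*x^2/(3*z^3) - (3*e^2-2*e)*x/z + e^2*(1-e)*z.

Lemma piece1 x e a b : 0 < a <= b ->
  (forall z, a <= z <= b -> e <= x / (z*z) <= e + 1) ->
  RInt (fz x e) a b = A1 x e b - A1 x e a.
Proof.
  intros Hab Hz. apply is_RInt_unique.
  replace (A1 x e b - A1 x e a) with (minus (A1 x e b) (A1 x e a)) by reflexivity.
  apply (is_RInt_derive (V := R_CompleteNormedModule)).
  - intros z Hz'. rewrite Rmin_left, Rmax_right in Hz' by lra.
    specialize (Hz z Hz').
    unfold fz. rewrite hh_pos by lra. unfold A1. auto_derive.
    + repeat split; apply Rgt_not_eq; try apply Rmult_lt_0_compat; try lra;
      repeat apply Rmult_lt_0_compat; lra.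
    + assert (z <> 0) by lra. field; auto.
  - intros z Hz'. apply fz_cont. rewrite Rmin_left in Hz' by lra. lra.
Qed.

Lemma piece2 x e a b : 0 < a <= b ->
  (forall z, a <= z <= b -> e - 1 <= x / (z*z) <= e) ->
  RInt (fz x e) a b = A2 x e b - A2 x e a.
Proof.
  intros Hab Hz. apply is_RInt_unique.
  replace (A2 x e b - A2 x e a) with (minus (A2 x e b) (A2 x e a)) by reflexivity.
  apply (is_RInt_derive (V := R_CompleteNormedModule)).
  - intros z Hz'. rewrite Rmin_left, Rmax_right in Hz' by lra.
    specialize (Hz z Hz').
    unfold fz. rewrite hh_neg by lra. unfold A2. auto_derive.
    + repeat split; apply Rgt_not_eq; try apply Rmult_lt_0_compat; try lra;
      repeat apply Rmult_lt_0_compat; lra.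
    + assert (z <> 0) by lra. field; auto.
  - intros z Hz'. apply fz_cont. rewrite Rmin_left in Hz' by lra. lra.
Qed.

Lemma piece0 x e a b : 0 < a <= b ->
  (forall z, a <= z <= b -> x / (z*z) <= e - 1 \/ e + 1 <= x / (z*z)) ->
  RInt (fz x e) a b = 0.
Proof.
  intros Hab Hz.
  assert (H := abs_RInt_le_const (fz x e) a b 0 ltac:(lra) (fz_exRInt x e a b ltac:(lra) ltac:(lra))).
  assert (Rabs (RInt (fz x e) a b) <= 0).
  { eapply Rle_trans. apply H. intros t Ht. unfold fz.
    destruct (Hz t Ht). rewrite hh_small by lra. rewrite Rabs_R0; lra.
    rewrite hh_big by lra. rewrite Rabs_R0; lra. lra. }
  pose proof (Rabs_pos (RInt (fz x e) a b)).
  destruct (Rabs_le_b _ _ ltac:(exact H0)) ; lra.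
Qed.


Lemma le_div_iff m x p : 0 < p -> (m <= x / p <-> m * p <= x).
Proof. intros Hp. split; intros H.
  - apply Rmult_le_compat_r with (r := p) in H; [|lra]. unfold Rdiv in H.
    rewrite Rmult_assoc, Rinv_l, Rmult_1_r in H by lra. exact H.
  - apply Rmult_le_reg_r with p; auto. unfold Rdiv.
    rewrite Rmult_assoc, Rinv_l, Rmult_1_r by lra. exact H. Qed.

Lemma div_le_iff m x p : 0 < p -> (x / p <= m <-> x <= m * p).
Proof. intros Hp. split; intros H.
  - apply Rmult_le_compat_r with (r := p) in H; [|lra]. unfold Rdiv in H.
    rewrite Rmult_assoc, Rinv_l, Rmult_1_r in H by lra. exact H.
  - apply Rmult_le_reg_r with p; auto. unfold Rdiv.
    rewrite Rmult_assoc, Rinv_l, Rmult_1_r by lra. exact H. Qed.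

Lemma sq_cmp1 x sx r m z : 0 < sx -> x = sx * sx -> 0 < r -> r * r = m -> 0 < z ->
  z <= sx / r -> m <= x / (z * z).
Proof. intros Hs Hx Hr Hm Hz H.
  apply (le_div_iff z sx r Hr) in H. apply le_div_iff. nra. subst.
  assert (0 <= z * r) by nra. nra. Qed.

Lemma sq_cmp2 x sx r m z : 0 < sx -> x = sx * sx -> 0 < r -> r * r = m -> 0 < z ->
  sx / r <= z -> x / (z * z) <= m.
Proof. intros Hs Hx Hr Hm Hz H.
  apply (div_le_iff z sx r Hr) in H. apply div_le_iff. nra. subst.
  nra. Qed.

Definition F1 e m := m^2/5 - (1+3*e)*m/3 + (2*e+3*e^2) + e^2*(1+e)/m.
Definition F2 e m := - m^2/5 - (1-3*e)*m/3 - (3*e^2-2*e) + e^2*(1-e)/m.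

Lemma A1_eval x e sx r m : 0 < sx -> 0 < r -> x = sx*sx -> r * r = m ->
  A1 x e (sx / r) = sx * r * F1 e m.
Proof. intros. subst. unfold A1, F1. field. lra. Qed.

Lemma A2_eval x e sx r m : 0 < sx -> 0 < r -> x = sx*sx -> r * r = m ->
  A2 x e (sx / r) = sx * r * F2 e m.
Proof. intros. subst. unfold A2, F2. field. lra. Qed.

Lemma theta_id e r0 r1 r2 : 1 <= e -> 
  r0 * F1 e e - r1 * F1 e (e+1) + r2 * (- (e-1)^2/5 - (1-3*e)*(e-1)/3 - (3*e^2-2*e) - e^2) - r0 * F2 e e
  = 32 * e^2/5 * r0 - (48*e^2+16*e-2)/15 * r1 - (48*e^2-16*e-2)/15 * r2.
Proof. intros. unfold F1, F2. field. lra. Qed.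

Lemma F2_em1 e : 1 < e -> F2 e (e-1) = - (e-1)^2/5 - (1-3*e)*(e-1)/3 - (3*e^2-2*e) - e^2.
Proof. intros. unfold F2. field. lra. Qed.

Lemma fz_bound x e z : Rabs (fz x e z) <= 1.
Proof. apply hh_bound. Qed.

Lemma start_bound x e sx r1 : 0 < sx -> x = sx*sx -> 0 < r1 -> r1*r1 = e + 1 ->
  Rabs (RInt (fz x e) 1 (sx / r1)) <= 1.
Proof.
  intros Hs Hx Hr Hm. assert (Hy : 0 < sx / r1) by (apply Rdiv_lt_0_compat; lra).
  destruct (Rle_dec (sx / r1) 1).
  - rewrite <- opp_RInt_swap by (apply fz_exRInt; lra).
    change (opp (RInt (fz x e) (sx / r1) 1)) with (- RInt (fz x e) (sx / r1) 1).
    rewrite Rabs_Ropp. eapply Rle_trans. apply abs_RInt_le_const. lra.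
    apply fz_exRInt; lra. intros; apply fz_bound. lra.
  - rewrite piece0. rewrite Rabs_R0; lra. lra.
    intros z Hz. right. apply (sq_cmp1 x sx r1 (e+1) z); auto; lra.
Qed.

Lemma int_main x d Z : 0 < x -> (1 <= d)%nat -> x + 1 <= Z ->
  Rabs (RInt (fz x (INR d)) 1 Z - vartheta d * sqrt x) <= 3.
Proof.
  intros Hx0 Hd HZ. unfold vartheta; cbv zeta.
  assert (He : 1 <= INR d) by (apply (le_INR 1 d) in Hd; simpl in Hd; lra).
  set (e := INR d) in *.
  assert (Hs : 0 < sqrt x) by (apply sqrt_lt_R0; lra).
  assert (Hx : x = sqrt x * sqrt x) by (rewrite sqrt_sqrt; lra).
  set (sx := sqrt x) in *.
  assert (H0 : 0 < sqrt e) by (apply sqrt_lt_R0; lra).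
  assert (H0' : sqrt e * sqrt e = e) by (rewrite sqrt_sqrt; lra).
  assert (H1 : 0 < sqrt (e+1)) by (apply sqrt_lt_R0; lra).
  assert (H1' : sqrt (e+1) * sqrt (e+1) = e+1) by (rewrite sqrt_sqrt; lra).
  set (r0 := sqrt e) in *. set (r1 := sqrt (e+1)) in *.
  assert (Hr01 : r0 <= r1) by nra.
  assert (Hr0 : 1 <= r0) by nra.
  set (y0 := sx / r0). set (y1 := sx / r1).
  assert (Hy1p : 0 < y1) by (apply Rdiv_lt_0_compat; lra).
  assert (Hy1 : y1 * r1 = sx) by (unfold y1; field; lra).
  assert (Hy0 : y0 * r0 = sx) by (unfold y0; field; lra).
  assert (Hy10 : y1 <= y0) by (unfold y0; apply le_div_iff; nra).
  assert (Hy0s : y0 <= sx) by (unfold y0; apply div_le_iff; nra).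
  assert (HsZ : sx <= Z) by nra.
  rewrite <- (RInt_Chasles (fz x e) 1 y1 Z) by (apply fz_exRInt; lra).
  rewrite <- (RInt_Chasles (fz x e) y1 y0 Z) by (apply fz_exRInt; lra).
  rewrite (piece1 x e y1 y0). 2: lra.
  2: { intros z Hz. split.
       apply (sq_cmp1 x sx r0 e z); auto; try lra. exact (proj2 Hz).
       apply (sq_cmp2 x sx r1 (e+1) z); auto; try lra. exact (proj1 Hz). }
  pose proof (start_bound x e sx r1 Hs Hx H1 H1') as SB. fold y1 in SB.
  unfold y0, y1. rewrite (A1_eval x e sx r0 e), (A1_eval x e sx r1 (e+1)) by auto.
  fold y0.
  destruct (Nat.eq_dec d 1) as [D1|D1].
  -
    assert (E1 : e = 1) by (unfold e; rewrite D1; reflexivity).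
    rewrite (piece2 x e y0 Z). 2: lra.
    2: { intros z Hz. split.
       rewrite E1, Rminus_diag. apply Rlt_le, Rdiv_lt_0_compat; nra.
       apply (sq_cmp2 x sx r0 e z); auto; try lra. exact (proj1 Hz). }
    unfold y0. rewrite (A2_eval x e sx r0 e) by auto.
    assert (Hr2 : sqrt (e - 1) = 0) by (rewrite E1, Rminus_diag; apply sqrt_0).
    rewrite Hr2.
    pose proof (theta_id e r0 r1 0 He) as T.
    assert (BZ : Rabs (A2 x e Z) <= 2).
    { unfold A2. rewrite E1. 
      assert (HZp : 0 < Z) by lra.
      assert (a1 : x / Z <= 1) by (apply div_le_iff; lra).
      assert (p2 : x^2 <= Z^2) by (apply pow_incr; lra).
      assert (p3 : x^3 <= Z^3) by (apply pow_incr; lra).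
      assert (q2 : Z^2 <= Z^3) by (apply Rle_pow; lia || lra).
      assert (q3 : Z^3 <= Z^5) by (apply Rle_pow; lia || lra).
      assert (Z3 : 0 < Z^3) by (apply pow_lt; lra).
      assert (Z5 : 0 < Z^5) by (apply pow_lt; lra).
      assert (a2 : x^2 / (3 * Z^3) <= 1/3) by (apply div_le_iff; lra).
      assert (a3 : x^3 / (5 * Z^5) <= 1/5) by (apply div_le_iff; lra).
      assert (b1 : 0 <= x / Z) by (apply Rlt_le, Rdiv_lt_0_compat; lra).
      assert (b2 : 0 <= x^2 / (3 * Z^3)) by (apply Rlt_le, Rdiv_lt_0_compat; [apply pow_lt|]; lra).
      assert (b3 : 0 <= x^3 / (5 * Z^5)) by (apply Rlt_le, Rdiv_lt_0_compat; [apply pow_lt|]; lra).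
      replace (- x ^ 3 / (5 * Z ^ 5) - (1 - 3 * 1) * x ^ 2 / (3 * Z ^ 3) - (3 * 1 ^ 2 - 2 * 1) * x / Z + 1 ^ 2 * (1 - 1) * Z)
        with (- (x ^ 3 / (5 * Z ^ 5)) + 2 * (x ^ 2 / (3 * Z ^ 3)) - x / Z) by (field; lra).
      apply Rabs_le; split; lra. }
    assert (T' : sx * (r0 * F1 e e - r1 * F1 e (e + 1) +
    0 * (- (e - 1) ^ 2 / 5 - (1 - 3 * e) * (e - 1) / 3 - (3 * e ^ 2 - 2 * e) - e ^ 2) -
    r0 * F2 e e) = sx * (32 * e ^ 2 / 5 * r0 - (48 * e ^ 2 + 16 * e - 2) / 15 * r1 -
    (48 * e ^ 2 - 16 * e - 2) / 15 * 0)) by (rewrite T; reflexivity).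
    clear T.
    apply Rabs_le_b in SB. apply Rabs_le_b in BZ.
    unfold plus; simpl. change y1 with (sx / r1) in SB. set (a := RInt (fz x e) 1 (sx / r1)) in *.
    apply Rabs_le. split; lra.
  - assert (He2 : 2 <= e).
    { unfold e. assert (2 <= d)%nat by lia. apply le_INR in H. simpl in H; lra. }
    assert (H2 : 0 < sqrt (e-1)) by (apply sqrt_lt_R0; lra).
    assert (H2' : sqrt (e-1) * sqrt (e-1) = e-1) by (rewrite sqrt_sqrt; lra).
    set (r2 := sqrt (e-1)) in *.
    assert (Hr20 : r2 <= r0) by nra.
    assert (Hr2 : 1 <= r2) by nra.
    set (y2 := sx / r2).
    assert (Hy2 : y2 * r2 = sx) by (unfold y2; field; lra).
    assert (Hy02 : y0 <= y2) by (unfold y2; apply le_div_iff; nra).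
    assert (Hy2s : y2 <= sx) by (unfold y2; apply div_le_iff; nra).
    rewrite <- (RInt_Chasles (fz x e) y0 y2 Z) by (apply fz_exRInt; lra).
    rewrite (piece2 x e y0 y2). 2: lra.
    2: { intros z Hz. split.
       apply (sq_cmp1 x sx r2 (e-1) z); auto; try lra. exact (proj2 Hz).
       apply (sq_cmp2 x sx r0 e z); auto; try lra. exact (proj1 Hz). }
    rewrite (piece0 x e y2 Z). 2: lra.
    2: { intros z Hz. left.
       apply (sq_cmp2 x sx r2 (e-1) z); auto; try lra. exact (proj1 Hz). }
    unfold y0, y2. rewrite (A2_eval x e sx r0 e), (A2_eval x e sx r2 (e-1)) by auto.
    rewrite F2_em1 by lra.
    pose proof (theta_id e r0 r1 r2 He) as T.
    assert (T' : sx * (r0 * F1 e e - r1 * F1 e (e + 1) +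
    r2 * (- (e - 1) ^ 2 / 5 - (1 - 3 * e) * (e - 1) / 3 - (3 * e ^ 2 - 2 * e) - e ^ 2) -
    r0 * F2 e e) = sx * (32 * e ^ 2 / 5 * r0 - (48 * e ^ 2 + 16 * e - 2) / 15 * r1 -
    (48 * e ^ 2 - 16 * e - 2) / 15 * r2)) by (rewrite T; reflexivity).
    clear T.
    apply Rabs_le_b in SB.
    unfold plus; simpl. change y1 with (sx / r1) in SB. set (a := RInt (fz x e) 1 (sx / r1)) in *.
    apply Rabs_le. split; lra.
Qed.


Definition aa (x : R) (n : nat) := x / (INR n * INR n).
Definition En (x e : R) (n : nat) :=
  if Rle_dec (aa x (S n)) (e + 1) then aa x n - aa x (S n) else 0.

Lemma div_anti x u v : 0 <= x -> 0 < u -> u <= v -> x / v <= x / u.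
Proof. intros. unfold Rdiv. apply Rmult_le_compat_l; auto. apply Rinv_le_contravar; auto. Qed.

Lemma t_id x p : 0 < p -> x / p - x / (p + 1) = x / (p * (p + 1)).
Proof. intros; field; lra. Qed.

Lemma per_n x e n : 0 < x -> (1 <= n)%nat ->
  Rabs (RInt (fz x e) (INR n) (INR (S n)) - hh (x / INR n - x / INR (S n) - e)) <= En x e n.
Proof.
  intros Hx Hn. assert (Hp : 1 <= INR n) by (apply (le_INR 1 n) in Hn; simpl in Hn; lra).
  rewrite S_INR. set (p := INR n) in *.
  set (c := hh (x / p - x / (p + 1) - e)).
  assert (Ex : ex_RInt (fz x e) p (p + 1)) by (apply fz_exRInt; lra).
  assert (Ex2 : ex_RInt (fun z => fz x e z - c) p (p + 1)).
  { exact (ex_RInt_minus (V := R_NormedModule) (fz x e) (fun _ => c) p (p+1) Ex (ex_RInt_const _ _ _)). }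
  assert (EQ : RInt (fun z => fz x e z - c) p (p + 1) = RInt (fz x e) p (p + 1) - c).
  { transitivity (RInt (fun z => minus (fz x e z) c) p (p + 1)). reflexivity.
    rewrite (RInt_minus (V := R_CompleteNormedModule) (fz x e) (fun _ => c)); auto.
    rewrite RInt_const.
    change (scal (p + 1 - p) c) with ((p + 1 - p) * c).
    change (@eq R (RInt (fz x e) p (p + 1) - (p + 1 - p) * c) (RInt (fz x e) p (p + 1) - c)). ring.
    apply ex_RInt_const. }
  rewrite <- EQ.
  apply Rle_trans with ((p + 1 - p) * En x e n).
  2: { rewrite Rplus_minus_l. lra. }
  apply (abs_RInt_le_const (fun z => fz x e z - c) p (p + 1) (En x e n)). lra. exact Ex2.
  intros z Hz.
  assert (T : x / p - x / (p + 1) = x / (p * (p + 1))) by (apply t_id; lra).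
  unfold c; rewrite T.
  assert (Z1 : z * z <= (p+1)*(p+1)) by (apply Rmult_le_compat; lra).
  assert (Z2 : p * p <= z * z) by (apply Rmult_le_compat; lra).
  assert (Z3 : p * (p+1) <= (p+1)*(p+1)) by (apply Rmult_le_compat; lra).
  assert (Z4 : p * p <= p * (p+1)) by (apply Rmult_le_compat; lra).
  assert (Z5 : 0 < p * p) by (apply Rmult_lt_0_compat; lra).
  assert (B1 : x / ((p+1)*(p+1)) <= x / (z * z)) by (apply div_anti; lra).
  assert (B2 : x / (z * z) <= x / (p * p)) by (apply div_anti; lra).
  assert (B3 : x / ((p+1)*(p+1)) <= x / (p * (p+1))) by (apply div_anti; lra).
  assert (B4 : x / (p * (p+1)) <= x / (p * p)) by (apply div_anti; lra).
  unfold En, aa. rewrite S_INR. fold p.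
  destruct Rle_dec.
  - eapply Rle_trans. unfold fz. apply hh_lip.
    apply Rabs_le; split; lra.
  - unfold fz. rewrite hh_big, hh_big by lra. rewrite Rminus_0_r, Rabs_R0. lra.
Qed.


Lemma sumN_S f N : sumN f (S N) = sumN f N + f (S N).
Proof. reflexivity. Qed.

Lemma sum_RInt x e N :
  sumN (fun n => RInt (fz x e) (INR n) (INR (S n))) N = RInt (fz x e) 1 (INR N + 1).
Proof.
  induction N as [|N IH].
  - simpl. rewrite Rplus_0_l. rewrite RInt_point. reflexivity.
  - rewrite sumN_S, IH. rewrite !S_INR.
    rewrite <- (RInt_Chasles (fz x e) 1 (INR N + 1) (INR N + 1 + 1)). reflexivity.
    apply fz_exRInt; pose proof (pos_INR N); lra.
    apply fz_exRInt; rewrite ?S_INR; pose proof (pos_INR N); lra.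
Qed.

Lemma phi_mono a b : a <= b -> phi a <= phi b.
Proof.
  intros H. unfold phi.
  assert (cl a <= cl b) by (unfold cl, Rmax, Rmin; repeat destruct Rle_dec; lra).
  set (u := cl a) in *. set (v := cl b) in *.
  unfold Rabs; repeat destruct Rcase_abs; nra.
Qed.

Lemma phi_bound a : Rabs (phi a) <= 1.
Proof. unfold phi. pose proof (cl_in a). set (u := cl a) in *.
  rewrite Rabs_mult, Rabs_Rabsolu. assert (Rabs u <= 1) by (apply Rabs_le; lra).
  pose proof (Rabs_pos u). nra. Qed.

Lemma ind1_mono a b : a <= b -> ind1 a <= ind1 b.
Proof. unfold ind1; repeat destruct Rle_dec; lra. Qed.
Lemma ind2_anti a b : a <= b -> ind2 b <= ind2 a.
Proof. unfold ind2; repeat destruct Rle_dec; lra. Qed.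
Lemma ind1_bound a : Rabs (ind1 a) <= 1.
Proof. unfold ind1; destruct Rle_dec; rewrite ?Rabs_R1, ?Rabs_R0; lra. Qed.
Lemma ind2_bound a : Rabs (ind2 a) <= 1.
Proof. unfold ind2; destruct Rle_dec; rewrite ?Rabs_R1, ?Rabs_R0; lra. Qed.

Lemma s_mono x e n : 0 < x -> (1 <= n)%nat ->
  x / INR (S n) - x / INR (S (S n)) - e <= x / INR n - x / INR (S n) - e.
Proof.
  intros Hx Hn. assert (Hp : 1 <= INR n) by (apply (le_INR 1 n) in Hn; simpl in Hn; lra).
  rewrite !S_INR. set (p := INR n) in *.
  rewrite (t_id x p), (t_id x (p+1)) by lra.
  assert (p * (p + 1) <= (p + 1) * (p + 1 + 1)) by (apply Rmult_le_compat; lra).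
  assert (0 < p * (p + 1)) by (apply Rmult_lt_0_compat; lra).
  assert (x / ((p + 1) * (p + 1 + 1)) <= x / (p * (p + 1))) by (apply div_anti; lra).
  lra.
Qed.

Lemma gg_sum x e N : 0 < x ->
  Rabs (sumN (fun n => gg (x / INR n - x / INR (S n) - e) *
       (frac_part (x / INR n) - frac_part (x / INR (S n)))) N) <= 12.
Proof.
  intros Hx.
  set (s := fun n => x / INR n - x / INR (S n) - e).
  set (u := fun n => frac_part (x / INR n)).
  assert (Hu : forall n, 0 <= u n <= 1) by (intros; unfold u; pose proof (frac_bounds (x / INR n)); lra).
  assert (Hs : forall n, (1 <= n)%nat -> s (S n) <= s n) by (intros; unfold s; apply s_mono; auto).
  replace (sumN (fun n => gg (x / INR n - x / INR (S n) - e) *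
       (frac_part (x / INR n) - frac_part (x / INR (S n)))) N) with
    (sumN (fun n => phi (s n) * (u n - u (S n))) N
     + - sumN (fun n => ind1 (s n) * (u n - u (S n))) N
     + sumN (fun n => ind2 (s n) * (u n - u (S n))) N).
  2: { rewrite <- sumN_opp, <- !sumN_plus. apply sumN_ext. intros n _.
       unfold gg, s, u. ring. }
  pose proof (abel_dec (fun n => phi (s n)) u N
     (fun n H => phi_mono _ _ (Hs n H)) (fun n => phi_bound _) Hu) as A1.
  pose proof (abel_dec (fun n => ind1 (s n)) u N
     (fun n H => ind1_mono _ _ (Hs n H)) (fun n => ind1_bound _) Hu) as A2.
  pose proof (abel_inc (fun n => ind2 (s n)) u N
     (fun n H => ind2_anti _ _ (Hs n H)) (fun n => ind2_bound _) Hu) as A3.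
  simpl in A1, A2, A3.
  apply Rabs_le_b in A1. apply Rabs_le_b in A2. apply Rabs_le_b in A3.
  apply Rabs_le; lra.
Qed.


Lemma Int_part_0 r : 0 <= r < 1 -> Int_part r = 0%Z.
Proof. intros H. symmetry. apply Int_part_spec. simpl. lra. Qed.

Lemma Qterm_zero d x n : (1 <= d)%nat -> 0 < x -> x < INR n -> Qterm d x n = 0.
Proof.
  intros Hd Hx Hn. unfold Qterm.
  assert (Hn' : INR n < INR (S n)) by (rewrite S_INR; lra).
  rewrite (Int_part_0 (x / INR n)), (Int_part_0 (x / INR (S n))).
  - destruct (Z.eqb_spec (0 - 0)%Z (Z.of_nat d)); [lia|reflexivity].
  - split. apply Rlt_le, Rdiv_lt_0_compat; lra.
    apply Rmult_lt_reg_r with (INR (S n)); [lra|]. unfold Rdiv; rewrite Rmult_assoc, Rinv_l; lra.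
  - split. apply Rlt_le, Rdiv_lt_0_compat; lra.
    apply Rmult_lt_reg_r with (INR n); [lra|]. unfold Rdiv; rewrite Rmult_assoc, Rinv_l; lra.
Qed.

Lemma sum_n_sumN (a : nat -> R) m : sum_n (fun k => a (S k)) m = sumN a (S m).
Proof. induction m. rewrite sum_O. simpl. ring.
  rewrite sum_Sn, IHm. reflexivity. Qed.

Lemma sumN_stable (a : nat -> R) N : (forall n, (N < n)%nat -> a n = 0) ->
  forall M, (N <= M)%nat -> sumN a M = sumN a N.
Proof. intros Ha M. induction M; intros HM.
  - assert (N = 0%nat) by lia. subst; reflexivity.
  - destruct (Nat.eq_dec N (S M)). subst; reflexivity.
    rewrite sumN_S, IHM by lia. rewrite Ha by lia. ring. Qed.

Lemma Q_fin d x N : (1 <= d)%nat -> 0 < x -> x <= INR N -> Q d x = sumN (Qterm d x) N.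
Proof.
  intros Hd Hx HN. unfold Q. apply is_series_unique.
  assert (Ha : forall n, (N < n)%nat -> Qterm d x n = 0).
  { intros n Hn. apply Qterm_zero; auto. apply lt_INR in Hn. lra. }
  assert (L : is_lim_seq (sum_n (fun k => Qterm d x (S k))) (sumN (Qterm d x) N)).
  { apply (is_lim_seq_ext_loc (fun _ => sumN (Qterm d x) N)).
    - exists N. intros m Hm. rewrite sum_n_sumN. symmetry. apply sumN_stable; auto.
    - apply is_lim_seq_const. }
  exact L.
Qed.


Lemma aa_facts x n : 0 < x -> (1 <= n)%nat ->
  0 < aa x n /\ aa x (S n) <= aa x n /\ aa x n <= 4 * aa x (S n).
Proof.
  intros Hx Hn. assert (Hp : 1 <= INR n) by (apply (le_INR 1 n) in Hn; simpl in Hn; lra).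
  unfold aa. rewrite S_INR. set (p := INR n) in *.
  assert (P1 : 0 < p * p) by (apply Rmult_lt_0_compat; lra).
  assert (P2 : p * p <= (p+1)*(p+1)) by (apply Rmult_le_compat; lra).
  split; [apply Rdiv_lt_0_compat; lra|]. split. apply div_anti; lra.
  replace (x / (p * p)) with (4 * x / (4 * (p * p))) by (field; lra).
  replace (4 * (x / ((p + 1) * (p + 1)))) with (4 * x / ((p + 1) * (p + 1))) by (field; lra).
  apply div_anti; nra.
Qed.

Lemma main_bound d x N : (1 <= d)%nat -> 0 < x -> x <= INR N ->
  Rabs (Q d x - vartheta d * sqrt x) <= 4 * (INR d + 1) + 15.
Proof.
  intros Hd Hx HN.
  rewrite (Q_fin d x N Hd Hx HN).
  rewrite (sumN_ext _ (fun n => hh (x / INR n - x / INR (S n) - INR d)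
    + gg (x / INR n - x / INR (S n) - INR d) * (frac_part (x / INR n) - frac_part (x / INR (S n)))))
    by (intros; apply Qterm_id).
  rewrite sumN_plus.
  pose proof (gg_sum x (INR d) N Hx) as G.
  pose proof (int_main x d (INR N + 1) Hx Hd ltac:(lra)) as I.
  rewrite <- sum_RInt in I.
  assert (D : Rabs (sumN (fun n => RInt (fz x (INR d)) (INR n) (INR (S n))) N
                   - sumN (fun n => hh (x / INR n - x / INR (S n) - INR d)) N) <= 4 * (INR d + 1)).
  { unfold Rminus at 1. rewrite <- (sumN_opp (fun n => hh (x / INR n - x / INR (S n) - INR d))).
    rewrite <- sumN_plus.
    eapply Rle_trans. apply sumN_abs_le with (g := En x (INR d)).
    intros n Hn. apply per_n; auto; lia.
    unfold En. apply tail_sum.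
    intros n Hn; apply (aa_facts x n Hx Hn).
    intros n Hn; apply (aa_facts x n Hx Hn).
    intros n Hn; apply (aa_facts x n Hx Hn).
    pose proof (pos_INR d); lra. }
  revert G I D.
  generalize (sumN (fun n => RInt (fz x (INR d)) (INR n) (INR (S n))) N).
  generalize (sumN (fun n => hh (x / INR n - x / INR (S n) - INR d)) N).
  generalize (sumN (fun n => gg (x / INR n - x / INR (S n) - INR d) *
      (frac_part (x / INR n) - frac_part (x / INR (S n)))) N).
  intros g h r G I D.
  apply Rabs_le_b in G. apply Rabs_le_b in I. apply Rabs_le_b in D.
  apply Rabs_le; lra.
Qed.

Theorem proposition10 :
  exists C : R, forall (d : nat) (x : R),
    (1 <= d)%nat -> 0 < x ->
    Rabs (Q d x - vartheta d * sqrt x) <= C * (INR d) ^ 2.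
Proof.
  exists 24. intros d x Hd Hx.
  assert (He : 1 <= INR d) by (apply (le_INR 1 d) in Hd; simpl in Hd; lra).
  destruct (archimed x) as [U1 U2].
  assert (Hu : (0 < up x)%Z) by (apply lt_IZR; lra).
  assert (HN : x <= INR (Z.to_nat (up x))).
  { rewrite INR_IZR_INZ, Z2Nat.id by lia. lra. }
  eapply Rle_trans. apply (main_bound d x _ Hd Hx HN). nra.
Qed.
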